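(* Let $\sigma:\mathbb{R}^d\to\mathbb{R}^{d\times m}$ and $b:\mathbb{R}^d\to\mathbb{R}^d$ be continuous functions such that for some $C>0$ and all $x,y\in\mathbb{R}^d$ with $|x-y|<1$, $$\|\sigma(x)-\sigma(y)\|\le C|x-y|\sqrt{\log\tfrac{1}{|x-y|}},\qquad |b(x)-b(y)|\le C|x-y|\log\tfrac{1}{|x-y|}.$$ Then $\sigma$ and $b$ satisfy the following condition: there exist constants $C>0$ and $\mu>0$ such that for every integer $N>e$ and all $x,y\in\mathbb{R}^d$ with $|x|,|y|\le N$, $$\|\sigma(x)-\sigma(y)\|\le C\sqrt{\log N}\,|x-y|+C\frac{\log N}{N^{\mu}},\qquad |b(x)-b(y)|\le C\log N\,|x-y|+C\frac{\log N}{N^{\mu}}.$$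
   Context: $|\cdot|$ is the Euclidean norm and $\|\sigma\|^2=\sum_{i,j}\sigma_{ij}^2$. The expressions $u\log(1/u)$ and $u\sqrt{\log(1/u)}$ are taken to be $0$ at $u=0$. *)

(* Defs.v *)
From HB Require Import structures.
From mathcomp Require Import all_boot all_order all_algebra.
From mathcomp Require Import all_classical all_reals all_analysis.
Set Implicit Arguments. Unset Strict Implicit. Unset Printing Implicit Defensive.
Import Order.TTheory GRing.Theory Num.Theory.
Local Open Scope ring_scope.

Definition eucl {R : realType} {d : nat} (x : 'rV[R]_d) : R :=
  Num.sqrt (\sum_(i < d) x 0 i ^+ 2).

Definition frob {R : realType} {d m : nat} (s : 'M[R]_(d, m)) : R :=
  Num.sqrt (\sum_(i < d) \sum_(j < m) s i j ^+ 2).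

(* Main.v *)
Require Import Defs.
From HB Require Import structures.
From mathcomp Require Import all_boot all_order all_algebra.
From mathcomp Require Import all_classical all_reals all_analysis.
From mathcomp Require Import ring lra.
Import Order.TTheory GRing.Theory Num.Theory numFieldNormedType.Exports.
Local Open Scope ring_scope.

Section Mink.
Variable R : realType.

Lemma sq0_all (I : finType) (a : I -> R) : \sum_i a i ^+ 2 <= 0 -> forall i, a i = 0.
Proof.
move=> H i.
have H0 : \sum_i a i ^+ 2 = 0.
  by apply/eqP; rewrite eq_le H sumr_ge0 // => j _; rewrite sqr_ge0.
have := psumr_eq0P (P := predT) (fun j _ => sqr_ge0 (a j)) H0 (i := i) isT.
by move/eqP; rewrite sqrf_eq0 => /eqP.
Qed.

Lemma CSineq {I : finType} (a b : I -> R) :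
  \sum_i a i * b i <= Num.sqrt (\sum_i a i ^+ 2) * Num.sqrt (\sum_i b i ^+ 2).
Proof.
set A := \sum_i a i ^+ 2; set B := \sum_i b i ^+ 2.
have A0 : 0 <= A by rewrite sumr_ge0 // => i _; rewrite sqr_ge0.
have B0 : 0 <= B by rewrite sumr_ge0 // => i _; rewrite sqr_ge0.
have [A0'|Ap] := eqVneq (Num.sqrt A) 0.
  move/eqP: A0'; rewrite sqrtr_eq0 => /sq0_all H.
  rewrite big1 ?mul0r // => i _; by rewrite H mul0r.
have [B0'|Bp] := eqVneq (Num.sqrt B) 0.
  move/eqP: B0'; rewrite sqrtr_eq0 => /sq0_all H.
  rewrite big1 ?mulr0 // => i _; by rewrite H mulr0.
set sa := Num.sqrt A; set sb := Num.sqrt B.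
have sa0 : 0 < sa by rewrite lt0r Ap sqrtr_ge0.
have sb0 : 0 < sb by rewrite lt0r Bp sqrtr_ge0.
have hA : sa ^+ 2 = A by rewrite sqr_sqrtr.
have hB : sb ^+ 2 = B by rewrite sqr_sqrtr.
have key : forall i, 2 * (a i * b i) * (sa * sb) <= a i ^+ 2 * sb ^+ 2 + b i ^+ 2 * sa ^+ 2.
  move=> i; have := sqr_ge0 (a i * sb - b i * sa); nra.
have sumk : 2 * (\sum_i a i * b i) * (sa * sb) <= A * sb ^+ 2 + B * sa ^+ 2.
  rewrite -mulrA mulr_suml mulr_sumr /A /B !mulr_suml -big_split /=.
  apply: ler_sum => i _; apply: le_trans (key i); by rewrite mulrA.
move: sumk; rewrite -{1}hA -{1}hB => sumk.
have p : 0 < sa * sb by rewrite mulr_gt0.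
have : (\sum_i a i * b i) * (sa * sb) <= (sa * sb) * (sa * sb) by nra.
by rewrite ler_pM2r.
Qed.

Lemma mink (I : finType) (a b : I -> R) :
  Num.sqrt (\sum_i (a i + b i) ^+ 2) <=
  Num.sqrt (\sum_i a i ^+ 2) + Num.sqrt (\sum_i b i ^+ 2).
Proof.
have A0 : 0 <= \sum_i a i ^+ 2 by rewrite sumr_ge0 // => i _; rewrite sqr_ge0.
have B0 : 0 <= \sum_i b i ^+ 2 by rewrite sumr_ge0 // => i _; rewrite sqr_ge0.
have hA := sqr_sqrtr A0; have hB := sqr_sqrtr B0.
have cs := CSineq a b.
have e : \sum_i (a i + b i) ^+ 2 = \sum_i a i ^+ 2 + 2 * \sum_i a i * b i + \sum_i b i ^+ 2.
  rewrite mulr_sumr -!big_split /=; apply: eq_bigr => i _; ring.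
have s0 : 0 <= Num.sqrt (\sum_i a i ^+ 2) + Num.sqrt (\sum_i b i ^+ 2).
  by rewrite addr_ge0 ?sqrtr_ge0.
rewrite -(ger0_norm s0) -sqrtr_sqr ler_sqrt ?sqr_ge0 // e.
move: cs hA hB; set sa := Num.sqrt _; set sb := Num.sqrt _; nra.
Qed.

End Mink.


Section Norms.
Variable R : realType.

Lemma eucl_tri d (x y : 'rV[R]_d) : eucl (x + y) <= eucl x + eucl y.
Proof.
rewrite /eucl.
have -> : \sum_(i < d) (x + y) 0 i ^+ 2 = \sum_(i < d) (x 0 i + y 0 i) ^+ 2.
  by apply: eq_bigr => i _; rewrite mxE.
exact: (@mink R _ (fun i : 'I_d => x 0 i) (fun i => y 0 i)).
Qed.

Lemma frob_tri d m (x y : 'M[R]_(d, m)) : frob (x + y) <= frob x + frob y.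
Proof.
rewrite /frob !pair_bigA /=.
have -> : \sum_p (x + y) p.1 p.2 ^+ 2 = \sum_(p : 'I_d * 'I_m) (x p.1 p.2 + y p.1 p.2) ^+ 2.
  by apply: eq_bigr => i _; rewrite mxE.
exact: (@mink R _ (fun p : 'I_d * 'I_m => x p.1 p.2) (fun p => y p.1 p.2)).
Qed.

Lemma eucl_scale d (c : R) (x : 'rV[R]_d) : eucl (c *: x) = `|c| * eucl x.
Proof.
rewrite /eucl.
have -> : \sum_(i < d) (c *: x) 0 i ^+ 2 = c ^+ 2 * \sum_(i < d) x 0 i ^+ 2.
  by rewrite mulr_sumr; apply: eq_bigr => i _; rewrite mxE exprMn.
by rewrite sqrtrM ?sqr_ge0 // sqrtr_sqr.
Qed.

Lemma eucl_ge0 d (x : 'rV[R]_d) : 0 <= eucl x.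
Proof. exact: sqrtr_ge0. Qed.

Lemma eucl0 d : eucl (0 : 'rV[R]_d) = 0.
Proof. by rewrite -(scale0r (0 : 'rV[R]_d)) eucl_scale normr0 mul0r. Qed.

Lemma chain d (V : zmodType) (nv : V -> R) (F : 'rV[R]_d -> V) (K : R) :
  (forall u v, nv (u + v) <= nv u + nv v) -> 0 <= K ->
  (forall x y, eucl (x - y) < 1 -> nv (F x - F y) <= K) ->
  forall x y, nv (F x - F y) <= K * (eucl (x - y) + 1).
Proof.
move=> tri K0 H x y.
set r := eucl (x - y).
have r0 : 0 <= r by exact: eucl_ge0.
set M := (Num.truncn r).+1.
have rM : r < M%:R by exact: truncnS_gt.
have Mr : M%:R <= r + 1 by rewrite /M -natr1 lerD2r truncn_le.
have M0 : 0 < M%:R :> R by rewrite ltr0n.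
pose p (k : nat) := y + (k%:R / M%:R) *: (x - y).
have step : forall k, nv (F (p k.+1) - F (p k)) <= K.
  move=> k; apply: H.
  have -> : p k.+1 - p k = M%:R^-1 *: (x - y).
    rewrite /p opprD addrACA subrr add0r -scalerBl; congr (_ *: _).
    by rewrite -natr1 mulrDl addrAC subrr add0r mul1r.
  rewrite eucl_scale ger0_norm ?invr_ge0 ?ltW //.
  by rewrite mulrC ltr_pdivrMr // mul1r.
have claim : forall n, nv (F (p n.+1) - F (p 0)) <= n.+1%:R * K.
  elim=> [|n IH]; first by rewrite mul1r; exact: step.
  have -> : F (p n.+2) - F (p 0) = (F (p n.+2) - F (p n.+1)) + (F (p n.+1) - F (p 0)).
    by rewrite addrA subrK.
  apply: le_trans (tri _ _) _.
  rewrite -(@natr1 R n.+1) mulrDl mul1r addrC.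
  by apply: lerD => //; exact: step.
have px : p M = x by rewrite /p divff ?gt_eqF // scale1r addrC subrK.
have py : p 0 = y by rewrite /p mul0r scale0r addr0.
have := claim (Num.truncn r); rewrite -/M px py => h.
apply: le_trans h _; rewrite mulrC ler_wpM2l //.
Qed.

End Norms.


Section Ana.
Variable R : realType.

Lemma sqrt_le1D (t : R) : 0 <= t -> Num.sqrt t <= 1 + t.
Proof.
move=> t0; have h : 0 <= 1 + t by lra.
rewrite -(ger0_norm h) -sqrtr_sqr ler_sqrt ?sqr_ge0 //; nra.
Qed.

Lemma rlnV (r : R) : 0 < r -> r * ln r^-1 <= 2 * Num.sqrt r.
Proof.
move=> r0; set s := Num.sqrt r.
have s0 : 0 < s by rewrite sqrtr_gt0.
have rs : r = s ^+ 2 by rewrite sqr_sqrtr // ltW.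
have -> : r^-1 = (s^-1) ^+ 2 by rewrite rs exprVn.
rewrite lnXn ?invr_gt0 //.
have := ln_sublinear (x := s^-1); rewrite invr_gt0 => /(_ s0) hl.
rewrite rs mulr2n.
have e : s ^+ 2 * s^-1 = s by rewrite expr2 -mulrA divff ?gt_eqF // mulr1.
have p : 0 < s ^+ 2 by rewrite exprn_gt0.
have : s ^+ 2 * ln s^-1 <= s ^+ 2 * s^-1 by rewrite ler_pM2l // ltW.
rewrite e; lra.
Qed.

Lemma r_le_sqrt (r : R) : 0 <= r <= 1 -> r <= Num.sqrt r.
Proof.
move=> /andP[r0 r1]; set s := Num.sqrt r.
have s0 : 0 <= s by exact: sqrtr_ge0.
have s1 : s <= 1 by rewrite /s -sqrtr1 ler_wsqrtr.
have rs : r = s ^+ 2 by rewrite sqr_sqrtr.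
rewrite rs expr2; nra.
Qed.

End Ana.


Section Gen.
Variable R : realType.

Lemma gen d (V : zmodType) (nv : V -> R) (F : 'rV[R]_d -> V) (C L N : R)
    (H : R -> R) :
  (forall u v, nv (u + v) <= nv u + nv v) -> 0 < C -> 1 <= L -> 1 <= ln N -> 0 < N ->
  (forall r, 0 <= r < 1 -> r * H r <= 3 * Num.sqrt r) ->
  (forall r, N^-1 <= r < 1 -> r * H r <= r * L) ->
  (forall x y, eucl (x - y) < 1 -> nv (F x - F y) <= C * eucl (x - y) * H (eucl (x - y))) ->
  forall x y, nv (F x - F y) <= (6 * C) * L * eucl (x - y) + (6 * C) * (ln N / N `^ 2^-1).
Proof.
move=> tri C0 L1 lN1 N0 Hi Hii Hyp x y.
set r := eucl (x - y).
have r0 : 0 <= r by exact: eucl_ge0.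
have sN : N `^ 2^-1 = Num.sqrt N by rewrite powR12_sqrt // ltW.
have sN0 : 0 < Num.sqrt N by rewrite sqrtr_gt0.
have T2 : 0 <= (6 * C) * (ln N / N `^ 2^-1).
  by rewrite sN mulr_ge0 ?divr_ge0 ?sqrtr_ge0 //; lra.
have loc : forall x y, eucl (x - y) < 1 -> nv (F x - F y) <= 3 * C.
  move=> u v h; apply: le_trans (Hyp u v h) _.
  have e0 := @eucl_ge0 R _ (u - v).
  rewrite -mulrA.
  have := Hi (eucl (u - v)); rewrite e0 h => /(_ isT) hh.
  have s1 : Num.sqrt (eucl (u - v)) <= 1 by rewrite -sqrtr1 ler_wsqrtr // ltW.
  have : C * (eucl (u - v) * H (eucl (u - v))) <= C * (3 * Num.sqrt (eucl (u - v))).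
    by rewrite ler_pM2l.
  move=> hh2; apply: le_trans hh2 _.
  have h3 : 3 * Num.sqrt (eucl (u - v)) <= 3 by lra.
  by apply: le_trans (ler_wpM2l (ltW C0) h3) _; rewrite mulrC.
have [r1|r1] := leP 1 r.
  have := @chain R _ _ _ _ _ tri _ loc x y; rewrite -/r => /(_ ltac:(lra)) hc.
  apply: le_trans hc _.
  have h1 : 0 <= C * (r - 1) by rewrite mulr_ge0 //; lra.
  have h2 : 0 <= C * r * (L - 1) by rewrite !mulr_ge0 //; lra.
  nra.
have Hr := Hyp x y r1; rewrite -/r in Hr.
have [rN|rN] := leP N^-1 r.
  have := Hii r; rewrite rN r1 => /(_ isT) hh.
  apply: le_trans Hr _; rewrite -mulrA.
  have : C * (r * H r) <= C * (r * L) by rewrite ler_pM2l.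
  move=> hh2; apply: le_trans hh2 _.
  have h1 : 0 <= C * L * r by rewrite !mulr_ge0 //; lra.
  nra.
have := Hi r; rewrite r0 r1 => /(_ isT) hh.
have sr : Num.sqrt r <= (Num.sqrt N)^-1.
  rewrite -(sqrtrV (ltW N0)); apply: ler_wsqrtr; exact: ltW.
have : C * (r * H r) <= C * (3 * Num.sqrt r) by rewrite ler_pM2l.
rewrite mulrA -/r => hh2; apply: le_trans Hr _; apply: le_trans hh2 _.
have T1 : 0 <= 6 * C * L * r by rewrite !mulr_ge0 //; lra.
rewrite sN.
have : (Num.sqrt N)^-1 <= ln N / Num.sqrt N.
  by rewrite ler_pdivlMr // mulVf ?gt_eqF.
move=> h3.
have s0 := sqrtr_ge0 r.
have : 3 * C * Num.sqrt r <= 6 * C * (ln N / Num.sqrt N).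
  have hs : Num.sqrt r <= ln N / Num.sqrt N by apply: le_trans sr h3.
  nra.
lra.
Qed.

End Gen.


Lemma lnmono (R : realType) (N r : R) : 0 < N -> N^-1 <= r -> ln r^-1 <= ln N.
Proof.
move=> N0 hr.
have r0 : 0 < r by apply: lt_le_trans hr; rewrite invr_gt0.
rewrite ler_ln ?posrE ?invr_gt0 //.
rewrite -div1r ler_pdivrMr //.
by move: hr; rewrite -div1r ler_pdivrMr // mulrC.
Qed.

Lemma lnVge0 (R : realType) (r : R) : 0 < r -> r < 1 -> 0 <= ln r^-1.
Proof.
move=> r0 r1; apply: ln_ge0.
by rewrite -div1r ler_pdivlMr // mul1r ltW.
Qed.

Arguments lnVge0 {R}.
Arguments lnmono {R}.
Arguments sqrt_le1D {R}.
Arguments rlnV {R}.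
Arguments r_le_sqrt {R}.

Theorem proposition4p7 (R : realType) (d m : nat)
    (sigma : 'rV[R]_d -> 'M[R]_(d, m)) (b : 'rV[R]_d -> 'rV[R]_d) :
  continuous sigma -> continuous b ->
  (exists C : R, 0 < C /\
     forall x y : 'rV[R]_d, eucl (x - y) < 1 ->
       frob (sigma x - sigma y)
         <= C * eucl (x - y) * Num.sqrt (ln (eucl (x - y))^-1) /\
       eucl (b x - b y)
         <= C * eucl (x - y) * ln (eucl (x - y))^-1) ->
  exists C mu : R, 0 < C /\ 0 < mu /\
    forall N : nat, expR (1:R) < N%:R ->
    forall x y : 'rV[R]_d, eucl x <= N%:R -> eucl y <= N%:R ->
      frob (sigma x - sigma y)
        <= C * Num.sqrt (ln N%:R) * eucl (x - y)
           + C * (ln N%:R / (N%:R `^ mu)) /\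
      eucl (b x - b y)
        <= C * ln N%:R * eucl (x - y) + C * (ln N%:R / (N%:R `^ mu)).
Proof.
move=> _ _ [C [C0 HC]].
exists (6 * C), 2^-1; split; first lra.
split; first by rewrite invr_gt0.
move=> N hN x y _ _.
have N0 : 0 < N%:R :> R by apply: lt_trans hN; exact: expR_gt0.
have lN1 : 1 <= ln (N%:R : R).
  rewrite -[1 in X in X <= _](expRK (1:R)) ler_ln ?posrE ?expR_gt0 //; exact: ltW.
split.
- apply: (@gen R d _ frob sigma C (Num.sqrt (ln N%:R)) N%:R
           (fun r => Num.sqrt (ln r^-1))) => //.
  + exact: frob_tri.
  + rewrite -{1}sqrtr1 ler_sqrt; lra.
  + move=> r /andP[r0 r1].
    have [->|rp] := eqVneq r 0; first by rewrite mul0r sqrtr0 mulr0.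
    have rp' : 0 < r by rewrite lt0r rp.
    have l0 := lnVge0 _ rp' r1.
    have h1 := sqrt_le1D _ l0.
    have h2 := rlnV _ rp'.
    have h3 : r <= Num.sqrt r by apply: r_le_sqrt; rewrite r0 ltW.
    have : r * Num.sqrt (ln r^-1) <= r * (1 + ln r^-1) by rewrite ler_wpM2l.
    move=> h4; apply: le_trans h4 _; rewrite mulrDr mulr1; lra.
  + move=> r /andP[rN r1].
    have rp : 0 < r by apply: lt_le_trans rN; rewrite invr_gt0.
    rewrite (ler_wpM2l (ltW rp)) //; exact: (ler_wsqrtr (lnmono _ _ N0 rN)).
  + by move=> u v h; case: (HC u v h).
- apply: (@gen R d _ eucl b C (ln N%:R) N%:R (fun r => ln r^-1)) => //.
  + exact: eucl_tri.
  + move=> r /andP[r0 r1].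
    have [->|rp] := eqVneq r 0; first by rewrite mul0r sqrtr0 mulr0.
    have rp' : 0 < r by rewrite lt0r rp.
    have h2 := rlnV _ rp'.
    have := sqrtr_ge0 r; lra.
  + move=> r /andP[rN r1].
    have rp : 0 < r by apply: lt_le_trans rN; rewrite invr_gt0.
    apply: (ler_wpM2l (ltW rp)); exact: (lnmono _ _ N0 rN).
  + by move=> u v h; case: (HC u v h).
Qed.
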